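(* Let $\Gamma$ be a compact abelian group satisfying (G1)–(G3), and let $\Lambda$ be the topological $\mathbb{N}^{\times}$-graph with vertex set $\Gamma$, morphisms $(a,g)$ ($a\in\mathbb{N}^{\times}$, $g\in\Gamma$), $r(a,g)=g$, $s(a,g)=g^a$, $d(a,g)=a$ and composition $(a,g)(b,g^a)=(ab,g)$. (1) For $g\in\Gamma$ define $\mu_g:\Omega_{\mathbb{N}^{\times}}\to\Lambda$ by $\mu_g(a,b)=(a^{-1}b,g^a)$. Then $\mu_g\in\Lambda^\infty$, and for every $\beta\in\Lambda^\infty$ we have $\beta=\mu_{r(\beta)}$. (2) $\Lambda$ is aperiodic if and only if $\operatorname{int}(\operatorname{Tor}\Gamma)=\emptyset$.
   Context: $\mathbb{N}^{\times}$ is the multiplicative semigroup of positive integers; $\Gamma$ is written multiplicatively, $\omega_a(g)=g^a$, and (G1) $\omega_a(\Gamma)$ has finite index, (G2) $\ker\omega_a$ is finite, (G3) $|\ker\omega_{ab}|=|\ker\omega_a||\ker\omega_b|$ for all $a,b\in\mathbb{N}^{\times}$. $\Lambda^1=\Gamma$ denotes the vertex set; each $\{(a,g):g\in\Gamma\}$ is a compact open copy of $\Gamma$. $\Omega_{\mathbb{N}^{\times}}$ is the $\mathbb{N}^{\times}$-graph with vertex set $\mathbb{N}^{\times}$ and morphisms the pairs $(a,b)$ with $a\mid b$, range $a$, source $b$, degree $a^{-1}b$, composition $(a,b)(b,c)=(a,c)$. An infinite path with range $v$ is a degree-preserving continuous functor $\mu:\Omega_{\mathbb{N}^{\times}}\to\Lambda$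 with $\mu(1)=v$; $\Lambda^\infty$ is the set of infinite paths and $r(\mu)=\mu(1)$. For $m\in\mathbb{N}^{\times}$, $\tau^m(\mu)(a,b):=\mu(ma,mb)$. $\Lambda$ is aperiodic if for every nonempty open set $V\subseteq\Lambda^1$ there is $\mu\in\Lambda^\infty$ with $r(\mu)\in V$ such that $m\neq n$ implies $\tau^m(\mu)\neq\tau^n(\mu)$. $\operatorname{Tor}\Gamma$ is the subgroup of elements of finite order. *)

(* Defs.v *)
From HB Require Import structures.
From mathcomp Require Import all_boot all_order all_algebra.
From mathcomp Require Import all_classical all_reals all_analysis.
Set Implicit Arguments. Unset Strict Implicit. Unset Printing Implicit Defensive.
Import Order.TTheory GRing.Theory Num.Theory.
Local Open Scope classical_set_scope.
Local Open Scope ring_scope.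

(* Gamma is written ADDITIVELY: g^a is  g *+ a,  the identity is 0. *)
Section Lambda.
Variable G : topologicalZmodType.

Definition omega (a : nat) (g : G) : G := g *+ a.

Definition omega_img (a : nat) : set G := range (omega a).
Definition omega_ker (a : nat) : set G := [set g | omega a g = 0].

Definition finite_index (H : set G) : Prop :=
  exists s : seq G, forall g : G, exists2 x, x \in s & H (g - x).

Definition G1 : Prop := forall a : nat, (0 < a)%N -> finite_index (omega_img a).
Definition G2 : Prop := forall a : nat, (0 < a)%N -> finite_set (omega_ker a).
Definition G3 : Prop := forall a b : nat, (0 < a)%N -> (0 < b)%N ->
  (omega_ker (a * b) #= omega_ker a `*` omega_ker b)%card.

Definition lam_r (l : nat * G) : G := l.2.
Definition lam_s (l : nat * G) : G := omega l.1 l.2.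
Definition lam_d (l : nat * G) : nat := l.1.
Definition lam_comp (l l' : nat * G) : nat * G := (l.1 * l'.1, l.2)%N.
Definition lam_id (v : G) : nat * G := (1%N, v).

(* A functor mu : Omega_{N^x} -> Lambda is given by an object map
   [o : nat -> G] (on vertices a in N^x) and a morphism map
   [m : nat -> nat -> nat * G] (on morphisms (a,b), a | b).
   Omega_{N^x} carries the discrete topology, so continuity is automatic. *)
Definition is_inf_path (o : nat -> G) (m : nat -> nat -> nat * G) : Prop :=
  [/\ (forall a, (0 < a)%N -> m a a = lam_id (o a)),
      (forall a b, (0 < a)%N -> (a %| b)%N ->
         [/\ lam_d (m a b) = (b %/ a)%N,
             lam_r (m a b) = o a &
             lam_s (m a b) = o b]) &
      (forall a b c, (0 < a)%N -> (a %| b)%N -> (b %| c)%N ->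
         lam_comp (m a b) (m b c) = m a c)].

Record inf_path := InfPath {
  ip_obj : nat -> G;
  ip_mor : nat -> nat -> nat * G }.

Definition in_Lambda_inf (mu : inf_path) : Prop := is_inf_path (ip_obj mu) (ip_mor mu).

Definition ip_range (mu : inf_path) : G := ip_obj mu 1%N.

Definition ip_eq (mu nu : inf_path) : Prop :=
  (forall a, (0 < a)%N -> ip_obj mu a = ip_obj nu a) /\
  (forall a b, (0 < a)%N -> (a %| b)%N -> ip_mor mu a b = ip_mor nu a b).

Definition tau (k : nat) (mu : inf_path) : inf_path :=
  InfPath (fun a => ip_obj mu (k * a)%N) (fun a b => ip_mor mu (k * a)%N (k * b)%N).

Definition mu_of (g : G) : inf_path :=
  InfPath (fun a => omega a g) (fun a b => ((b %/ a)%N, omega a g)).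

Definition aperiodic : Prop :=
  forall V : set G, open V -> V !=set0 ->
    exists mu : inf_path, [/\ in_Lambda_inf mu, V (ip_range mu) &
      forall k n : nat, (0 < k)%N -> (0 < n)%N -> k <> n ->
        ~ ip_eq (tau k mu) (tau n mu)].

Definition Tor : set G := [set g | exists n : nat, (0 < n)%N /\ g *+ n = 0].

End Lambda.

(* Main.v *)
Require Import Defs.
From HB Require Import structures.
From mathcomp Require Import all_boot all_order all_algebra.
From mathcomp Require Import all_classical all_reals all_analysis.
Local Open Scope classical_set_scope.

Lemma mu_of_inf (G : topologicalZmodType) (g : G) : in_Lambda_inf (mu_of g).
Proof.
split.
- by move=> a a0; rewrite /= divnn a0.
- move=> a b a0 ab; split => //=.
  by rewrite /lam_s /omega /= -GRing.mulrnA mulnC divnK.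
- move=> a b c a0 /dvdnP[j ->] /dvdnP[k ->] /=.
  congr (_, _).
  have [->|j0] := posnP j; first by rewrite ?mul0n ?muln0 ?div0n ?mul0n ?divn0.
  by rewrite mulnK // mulnK ?muln_gt0 ?j0 // /= mulnC mulnA mulnK.
Qed.

Lemma inf_char (G : topologicalZmodType) (beta : inf_path G) :
  in_Lambda_inf beta ->
  (forall a, (0 < a)%N -> ip_obj beta a = omega a (ip_range beta)) /\
  (forall a b, (0 < a)%N -> (a %| b)%N ->
     ip_mor beta a b = ((b %/ a)%N, omega a (ip_range beta))).
Proof.
case=> _ H2 _.
have Ho : forall a, (0 < a)%N -> ip_obj beta a = omega a (ip_range beta).
  move=> a a0; have [d r s] := H2 1%N a isT (dvd1n a).
  by rewrite -s /lam_s /lam_r /lam_d in r d *; rewrite d divn1 r.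
split=> // a b a0 ab; have [d r _] := H2 a b a0 ab.
rewrite /lam_d /lam_r in d r.
by rewrite -Ho // -d -r; case: (ip_mor beta a b).
Qed.

Theorem lemma3p6 (G : topologicalZmodType) :
  compact [set: G] -> hausdorff_space G ->
  G1 G -> G2 G -> G3 G ->
  ((forall g : G, in_Lambda_inf (mu_of g)) /\
   (forall beta : inf_path G, in_Lambda_inf beta ->
      ip_eq beta (mu_of (ip_range beta)))) /\
  (aperiodic G <-> interior (@Tor G) = set0).
Proof.
move=> _ _ _ _ _.
split; first split.
- exact: mu_of_inf.
- move=> beta /(@inf_char G)[Ho Hm]; split=> [a a0|a b a0 ab].
  + by rewrite Ho.
  + by rewrite Hm.
split.
- move=> ap; apply/seteqP; split=> // x xi.
  have [mu [muL Vr Hne]] := ap _ (@open_interior _ (@Tor G)) (ex_intro _ x xi).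
  have [n [n0 rn]] := interior_subset Vr.
  have [Ho Hm] := @inf_char _ _ muL.
  apply: (Hne 1%N n.+1 isT isT); first by move=> e; case: e n0 => <-.
  have key : forall a, (0 < a)%N ->
      omega (n.+1 * a) (ip_range mu) = omega (1 * a) (ip_range mu).
    move=> a a0; rewrite /omega mulSn GRing.mulrnDr GRing.mulrnA rn.
    by rewrite GRing.mul0rn GRing.addr0 mul1n.
  split=> [a a0|a b a0 ab] /=.
  + by rewrite !Ho ?muln_gt0 ?a0 // key.
  + rewrite !Hm ?muln_gt0 ?a0 ?dvdn_pmul2l // key // !divnMl //.
- move=> I0 V oV [x Vx].
  have [g [Vg ng]] : exists g, V g /\ ~ Tor g.
    apply: contrapT => hn.
    have : (interior (@Tor G)) x.
      apply: (filterS (P := V)); last exact: open_nbhs_nbhs.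
      move=> y Vy; apply: contrapT => ny; apply: hn; by exists y.
    by rewrite I0.
  exists (mu_of g); split.
  + exact: mu_of_inf.
  + by rewrite /ip_range /= /omega GRing.mulr1n.
  + move=> k n k0 n0 kn [Ho _].
    have := Ho 1%N isT; rewrite /= /omega !muln1 => e.
    apply: ng.
    have [kn'|nk'|ekn] := ltngtP k n.
    * exists (n - k)%N; split; first by rewrite subn_gt0.
      by rewrite GRing.mulrnBr 1?ltnW // e GRing.subrr.
    * exists (k - n)%N; split; first by rewrite subn_gt0.
      by rewrite GRing.mulrnBr 1?ltnW // e GRing.subrr.
    * exfalso; exact: (kn ekn).
Qed.
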